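(* Let $G$ be a graph with maximum degree $2$ and let $k\ge2$ be an integer. Then the number of components of $G$ that are paths with at least $k-1$ vertices equals $s(G,P_{k-1})-s(G,P_k)-k\,s(G,C_k)$.
   Context: $P_j$ and $C_j$ denote the path and cycle with $j$ vertices; $s(G,H)$ is the number of vertex subsets $X\subseteq V(G)$ such that $G[X]$ is isomorphic to $H$; by convention $s(G,C_2)=0$. *)

(* Defs.v *)
(* A finite simple graph is a symmetric irreflexive
   relation e on a finite vertex type T. *)
From mathcomp Require Import all_boot.
Set Implicit Arguments. Unset Strict Implicit. Unset Printing Implicit Defensive.

Definition deg (T : finType) (e : rel T) (x : T) : nat := #|[set y | e x y]|.

Definition max_degree_eq (T : finType) (e : rel T) (d : nat) : Prop :=
  (forall x, deg e x <= d) /\ (exists x, deg e x = d).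

Definition path_rel (n : nat) : rel 'I_n :=
  fun a b => (a.+1 == b :> nat) || (b.+1 == a :> nat).

(* cycle C_n on 'I_n (meaningful for n >= 3): path edges plus {0, n-1} *)
Definition cycle_rel (n : nat) : rel 'I_n :=
  fun a b => path_rel a b ||
    (((a == 0 :> nat) && (b == n.-1 :> nat)) || ((b == 0 :> nat) && (a == n.-1 :> nat))).

Definition induced_iso (T : finType) (e : rel T) (X : {set T}) (n : nat)
  (H : rel 'I_n) : bool :=
  [exists f : {ffun 'I_n -> T},
     [&& injectiveb f, X == [set f i | i : 'I_n] &
         [forall a : 'I_n, forall b : 'I_n, H a b == e (f a) (f b)]]].

Definition s_count (T : finType) (e : rel T) (n : nat) (H : rel 'I_n) : nat :=
  #|[set X : {set T} | induced_iso e X H]|.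

Definition sP (T : finType) (e : rel T) (j : nat) : nat := s_count e (@path_rel j).

(* s(G, C_j), with the convention s(G, C_2) = 0 (and C_j undefined for j < 3) *)
Definition sC (T : finType) (e : rel T) (j : nat) : nat :=
  if j <= 2 then 0 else s_count e (@cycle_rel j).

Definition components (T : finType) (e : rel T) : {set {set T}} :=
  [set [set y | connect e x y] | x : T].

Definition n_path_comps (T : finType) (e : rel T) (m : nat) : nat :=
  #|[set C in components e | (m <= #|C|) && induced_iso e C (@path_rel #|C|)]|.

(* Main.v *)
Require Import Defs.
From mathcomp Require Import all_boot all_algebra.
From mathcomp Require Import zify.
Set Implicit Arguments. Unset Strict Implicit. Unset Printing Implicit Defensive.

Definition three (V : finType) (r : rel V) :=
  forall v a b c, r v a -> r v b -> r v c -> a != b -> c = a \/ c = b.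

Lemma three_deg (V : finType) (r : rel V) :
  (forall x, deg r x <= 2) -> three r.
Proof.
move=> hd v a b c ha hb hc hab.
case: (eqVneq c a) => [->|hca]; first by left.
case: (eqVneq c b) => [->|hcb]; first by right.
have : #|c |: [set a; b]| <= 2.
  apply: leq_trans (hd v); apply: subset_leq_card; apply/subsetP => y.
  by rewrite !inE => /orP [ | /orP [] ] /eqP ->; rewrite ?ha ?hb ?hc.
by rewrite cardsU1 cards2 !inE hab negb_or hca hcb.
Qed.

Lemma deg1_uniq (V : finType) (r : rel V) v a b :
  deg r v <= 1 -> r v a -> r v b -> a = b.
Proof.
move=> hd ha hb; apply/eqP; apply: contraTT hd => hab.
rewrite -ltnNge /deg.
have -> : 2 = #|[set a; b]| by rewrite cards2 hab.
by apply: subset_leq_card; apply/subsetP => y; rewrite !inE => /orP [] /eqP ->.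
Qed.

Lemma walk_uniq (V : finType) (r : rel V) : symmetric r -> three r ->
  forall m (F G : nat -> V),
  (forall i, i.+1 < m -> r (F i) (F i.+1)) ->
  (forall i, i.+2 < m -> F i != F i.+2) ->
  (forall i, i.+1 < m -> r (G i) (G i.+1)) ->
  (forall i, i.+2 < m -> G i != G i.+2) ->
  F 0 = G 0 -> F 1 = G 1 -> forall i, i < m -> F i = G i.
Proof.
move=> sym th m F G hF hF2 hG hG2 h0 h1.
suff : forall i, i.+1 < m -> F i = G i /\ F i.+1 = G i.+1.
  move=> H [|i] hi; first by [].
  by case: (H i hi).
elim=> [|i IH] hi; first by [].
have [e1 e2] := IH (ltnW hi).
split=> //.
have ha : r (F i.+1) (F i) by rewrite sym hF // ltnW.
have hb : r (F i.+1) (F i.+2) by rewrite hF.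
have hc : r (F i.+1) (G i.+2) by rewrite e2 hG.
have := th _ _ _ _ ha hb hc.
move=> /(_ (hF2 i hi)) [] // Hc.
by move: (hG2 i hi); rewrite Hc -e1 eqxx.
Qed.
Definition emb (V : finType) (r : rel V) n (H : rel 'I_n) (f : {ffun 'I_n -> V}) : bool :=
  injectiveb f && [forall a, forall b, H a b == r (f a) (f b)].
Definition Emb (V : finType) (r : rel V) n (H : rel 'I_n) := [set f | emb r H f].
Definition im (V : finType) n (f : {ffun 'I_n -> V}) := [set f i | i : 'I_n].
Definition Aut n (H : rel 'I_n) := Emb H H.
Definition fcomp (V : finType) n (f : {ffun 'I_n -> V}) (s : {ffun 'I_n -> 'I_n}) :
  {ffun 'I_n -> V} := [ffun i => f (s i)].

Lemma embP (V : finType) (r : rel V) n (H : rel 'I_n) (f : {ffun 'I_n -> V}) : reflect (injective f /\ forall a b, H a b = r (f a) (f b)) (@emb V r n H f).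
Proof.
apply: (iffP andP) => [[/injectiveP hi /forallP h]|[hi h]]; split.
- done.
- by move=> a b; move/forallP: (h a) => /(_ b) /eqP.
- by apply/injectiveP.
- by apply/forallP => a; apply/forallP => b; rewrite h.
Qed.

Lemma induced_isoE (V : finType) (r : rel V) (X : {set V}) n (H : rel 'I_n) : @induced_iso V r X n H = [exists f, emb r H f && (X == im f)].
Proof.
apply/existsP/existsP => [][f hf]; exists f; move: hf.
- by case/and3P => h1 h2 h3; rewrite /emb h1 h3 h2.
- by case/andP => /andP [h1 h3] h2; rewrite h1 h2 h3.
Qed.

Lemma card_im (V : finType) n (f : {ffun 'I_n -> V}) : injective f -> #|im f| = n.
Proof. by move=> hi; rewrite /im card_imset // card_ord. Qed.

Lemma O1 (V : finType) (r : rel V) n (H : rel 'I_n) : #|@Emb V r n H| = s_count r H * #|Aut H|.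
Proof.
have -> : s_count r H = #|(@im V n) @: Emb r H|.
  rewrite /s_count; apply: eq_card => X; rewrite inE induced_isoE.
  apply/existsP/imsetP => [[f /andP [hf /eqP ->]]|[f]]; first by exists f; rewrite ?inE.
  by rewrite inE => hf ->; exists f; rewrite hf eqxx.
rewrite -sum1_card (partition_big_imset (@im V n)) -sum_nat_const.
apply: eq_bigr => X /imsetP [f0]; rewrite inE => hf0 ->.
rewrite sum1dep_card.
move/embP: (hf0) => [hi0 hH0].
have fcinj : injective (fcomp f0).
  move=> s1 s2 /ffunP h; apply/ffunP => i; apply: hi0; move: (h i); by rewrite !ffunE.
rewrite -(card_imset _ fcinj); apply: eq_card => g; rewrite inE.
apply/idP/imsetP.
- case/andP; rewrite inE => hg /eqP himg.
  move/embP: (hg) => [hig hHg].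
  have ex : forall i, exists j, f0 j = g i.
    move=> i; have : g i \in im g by apply: imset_f.
    by rewrite himg => /imsetP [j _ ->]; exists j.
  pose s := [ffun i => odflt i [pick j | f0 j == g i]].
  have hs : forall i, f0 (s i) = g i.
    move=> i; rewrite ffunE; case: pickP => [j /eqP //|].
    by case: (ex i) => j hj /(_ j); rewrite hj eqxx.
  exists s.
    rewrite inE; apply/embP; split.
      by move=> a b hab; apply: hig; rewrite -!hs hab.
    by move=> a b; rewrite hHg hH0 !hs.
  by apply/ffunP => i; rewrite ffunE hs.
- case=> s; rewrite inE => /embP [his hHs] ->.
  have he : emb r H (fcomp f0 s).
    apply/embP; split.
      by move=> a b; rewrite !ffunE => /hi0 /his.
    by move=> a b; rewrite !ffunE hHs hH0.
  rewrite inE he /=.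
  move/embP: (he) => [hic _].
  rewrite eqEcard card_im // card_im // leqnn andbT.
  by apply/subsetP => x /imsetP [i _ ->]; rewrite ffunE; apply: imset_f.
Qed.
Section Cyc.
Variable n : nat.
Local Notation k := n.+3.

Definition csucc (a b : nat) := (a.+1 %% k == b).

Lemma csuccE a b : a < k -> b < k ->
  csucc a b = (a.+1 == b) || ((a == n.+2) && (b == 0)).
Proof.
move=> ha hb; rewrite /csucc; case: (ltnP a.+1 k) => h.
  rewrite modn_small //; lia.
have -> : a.+1 = k by lia.
rewrite modnn; lia.
Qed.

Lemma cycle_relE (a b : 'I_k) : cycle_rel a b = csucc a b || csucc b a.
Proof.
rewrite /cycle_rel /path_rel !csuccE //=; lia.
Qed.

Lemma csucc_rot c i j : j < k -> csucc ((c + i) %% k) ((c + j) %% k) = csucc i j.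
Proof.
move=> hj; rewrite /csucc -addn1 modnDml addn1 -addnS eqn_modDl.
by rewrite [j %% _]modn_small.
Qed.

Lemma csucc_refl c i j : i < k -> j < k ->
  csucc ((c + (k - i)) %% k) ((c + (k - j)) %% k) = csucc j i.
Proof.
move=> hi hj; rewrite /csucc -addn1 modnDml -addnA eqn_modDl.
rewrite -(eqn_modDr (i + j)).
have -> : k - i + 1 + (i + j) = k + j.+1 by lia.
have -> : k - j + (i + j) = k + i by lia.
by rewrite eqn_modDl [i %% _]modn_small.
Qed.

Lemma rot_inj c i j : i < k -> j < k -> (c + i) %% k = (c + j) %% k -> i = j.
Proof.
move=> hi hj /eqP; rewrite eqn_modDl !modn_small //; by move/eqP.
Qed.

Lemma refl_inj c i j : i < k -> j < k -> (c + (k - i)) %% k = (c + (k - j)) %% k -> i = j.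
Proof.
move=> hi hj /eqP; rewrite eqn_modDl -(eqn_modDr (i + j)).
have -> : k - i + (i + j) = k + j by lia.
have -> : k - j + (i + j) = k + i by lia.
by rewrite eqn_modDl !modn_small // => /eqP.
Qed.

Lemma csucc_antisym a b : a < k -> b < k -> csucc a b -> csucc b a -> False.
Proof. move=> ha hb; rewrite !csuccE //; lia. Qed.

Lemma val_inord_mod (m : nat) : nat_of_ord (inord (m %% k) : 'I_k) = m %% k.
Proof. by rewrite inordK // ltn_pmod. Qed.

Lemma three_cycle : three (@cycle_rel k).
Proof.
have pinj : forall x y : 'I_k, forall v : nat, csucc x v -> csucc y v -> x = y.
  move=> x y v; rewrite /csucc => /eqP h1 /eqP h2; apply: val_inj.
  apply: (@rot_inj 1 _ _ (ltn_ord x) (ltn_ord y)); by rewrite !add1n h1 h2.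
move=> v a b c; rewrite !cycle_relE /csucc.
move=> /orP [/eqP ha | ha] /orP [/eqP hb | hb] /orP [/eqP hc | hc] hab;
have hab' : a <> b by move=> e; rewrite e eqxx in hab.
all: first [ by left; apply: val_inj => /=; congruence
           | by right; apply: val_inj => /=; congruence
           | by left; apply: (pinj _ _ v)
           | by right; apply: (pinj _ _ v)
           | by exfalso; apply: hab'; apply: val_inj => /=; congruence
           | by exfalso; apply: hab'; apply: (pinj _ _ v) ].
Qed.


End Cyc.

Lemma three_path m : three (@path_rel m).
Proof.
move=> v a b c; rewrite /path_rel => h1 h2 h3 hab.
have hab' : val a != val b by rewrite val_eqE.
have : (val c == val a) || (val c == val b) by move: h1 h2 h3 hab'; rewrite /=; lia.
by case/orP => /eqP /val_inj ->; [left|right].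
Qed.

Lemma sym_path m : symmetric (@path_rel m).
Proof. by move=> a b; rewrite /path_rel orbC. Qed.

Lemma sym_cycle m : symmetric (@cycle_rel m).
Proof. move=> a b; rewrite /cycle_rel sym_path; lia. Qed.

Lemma path_cycle m (a b : 'I_m) : path_rel a b -> cycle_rel a b.
Proof. by rewrite /cycle_rel => ->. Qed.

Lemma walk_of_emb (V : finType) (r : rel V) m (H : rel 'I_m.+1) (f : {ffun 'I_m.+1 -> V}) :
  (forall a b, path_rel a b -> H a b) -> emb r H f ->
  (forall i, i.+1 < m.+1 -> r (f (inord i)) (f (inord i.+1))) /\
  (forall i, i.+2 < m.+1 -> f (inord i) != f (inord i.+2)).
Proof.
move=> hH /embP [hi hr]; split=> i hlt.
  rewrite -hr; apply: hH; rewrite /path_rel !inordK //; [by rewrite eqxx | lia].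
apply/eqP => /hi /(congr1 val); rewrite /= !inordK //; lia.
Qed.

Lemma Aut_path1 : #|Aut (@path_rel 1)| = 1.
Proof.
have -> : Aut (@path_rel 1) = setT.
  apply/setP => s; rewrite !inE; apply/embP; split.
    by move=> x y _; rewrite (ord1 x) (ord1 y).
  by move=> a b; rewrite (ord1 a) (ord1 b) (ord1 (s ord0)).
by rewrite cardsT card_ffun !card_ord.
Qed.

Definition idf m : {ffun 'I_m -> 'I_m} := [ffun i => i].
Definition revf m : {ffun 'I_m -> 'I_m} := [ffun i => rev_ord i].

Lemma idf_emb m : emb (@path_rel m) (@path_rel m) (idf m).
Proof. by apply/embP; split=> [x y|a b]; rewrite !ffunE. Qed.

Lemma idf_aut m : idf m \in Aut (@path_rel m).
Proof. by rewrite inE idf_emb. Qed.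

Lemma revf_emb m : emb (@path_rel m) (@path_rel m) (revf m).
Proof.
apply/embP; split=> [x y|a b]; rewrite !ffunE; first exact: rev_ord_inj.
rewrite /path_rel /=; have := ltn_ord a; have := ltn_ord b; lia.
Qed.

Lemma revf_aut m : revf m \in Aut (@path_rel m).
Proof. by rewrite inE revf_emb. Qed.

Lemma Aut_path2 n : #|Aut (@path_rel n.+2)| = 2.
Proof.
have -> : Aut (@path_rel n.+2) = [set idf n.+2; revf n.+2].
  apply/setP => s; rewrite in_set2; apply/idP/idP; last first.
    by case/orP => /eqP ->; [exact: idf_aut | exact: revf_aut].
  move=> hs; have hse : emb (@path_rel n.+2) (@path_rel n.+2) s by move: hs; rewrite inE.
  move/embP: (hse) => [his hH].
  have [sinv c1 c2] := injF_bij his.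
  have h0 : (nat_of_ord (s ord0) == 0) || (nat_of_ord (s ord0) == n.+1).
    apply/negPn/negP; rewrite negb_or => /andP [ha hb].
    pose y1 : 'I_n.+2 := inord (s ord0).-1.
    pose y2 : 'I_n.+2 := inord (s ord0).+1.
    have e1 : path_rel ord0 (sinv y1).
      rewrite hH c2 /path_rel /y1 inordK; last by have := ltn_ord (s ord0); set a0 := s ord0; lia.
      move: ha; set a0 := s ord0; lia.
    have e2 : path_rel ord0 (sinv y2).
      rewrite hH c2 /path_rel /y2 inordK; last by move: hb; have := ltn_ord (s ord0); set a0 := s ord0; lia.
      move: ha; set a0 := s ord0; lia.
    have : sinv y1 = sinv y2 by apply: val_inj; move: e1 e2; rewrite /path_rel /=; lia.
    move/(congr1 s); rewrite !c2 => /(congr1 (@nat_of_ord _)); rewrite /y1 /y2 !inordK;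
      move: ha hb; have := ltn_ord (s ord0); set a0 := s ord0; lia.
  have h1 : path_rel (s ord0) (s (inord 1)).
    by rewrite -hH /path_rel inordK.
  have [wF1 wF2] := walk_of_emb (fun a b (h : path_rel a b) => h) (hse).
  have i0 : (inord 0 : 'I_n.+2) = ord0 by apply: val_inj; rewrite /= inordK.
  case/orP: h0 => h0.
  - have [wG1 wG2] := walk_of_emb (fun a b (h : path_rel a b) => h) (idf_emb n.+2).
    have := walk_uniq (@sym_path _) (@three_path _) wF1 wF2 wG1 wG2.
    rewrite !ffunE.
    have e0 : s (inord 0) = inord 0 by rewrite i0; apply: val_inj; rewrite /= (eqP h0).
    have e1 : s (inord 1) = inord 1.
      apply: val_inj; move: h1; rewrite /path_rel (eqP h0) /= !inordK //; set a1 := s (inord 1); lia.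
    move=> /(_ e0 e1) h; apply/orP; left; apply/eqP/ffunP => x.
    by have := h x (ltn_ord x); rewrite !inord_val ffunE.
  - have [wG1 wG2] := walk_of_emb (fun a b (h : path_rel a b) => h) (revf_emb n.+2).
    have := walk_uniq (@sym_path _) (@three_path _) wF1 wF2 wG1 wG2.
    rewrite !ffunE.
    have e0 : s (inord 0) = rev_ord (inord 0).
      by rewrite i0; apply: val_inj; rewrite /= (eqP h0); lia.
    have e1 : s (inord 1) = rev_ord (inord 1).
      apply: val_inj; move: h1; rewrite /path_rel (eqP h0) /= !inordK //.
      have := ltn_ord (s (inord 1)); set a1 := s (inord 1); lia.
    move=> /(_ e0 e1) h; apply/orP; right; apply/eqP/ffunP => x.
    by have := h x (ltn_ord x); rewrite !inord_val !ffunE.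
rewrite cards2; apply/eqP; rewrite eqSS eqb1; apply/eqP => /ffunP /(_ ord0).
by rewrite !ffunE => /(congr1 (@nat_of_ord _)) /=; lia.
Qed.

Definition rot n (c : nat) : {ffun 'I_n.+3 -> 'I_n.+3} := [ffun i : 'I_n.+3 => inord ((c + i) %% n.+3)].
Definition refl n (c : nat) : {ffun 'I_n.+3 -> 'I_n.+3} :=
  [ffun i : 'I_n.+3 => inord ((c + (n.+3 - i)) %% n.+3)].
Definition sc n (a : 'I_n.+3) : 'I_n.+3 := inord (a.+1 %% n.+3).

Lemma rot_emb n c : emb (@cycle_rel n.+3) (@cycle_rel n.+3) (rot n c).
Proof.
apply/embP; split.
  move=> x y; rewrite !ffunE => /(congr1 (@nat_of_ord _)); rewrite !val_inord_mod.
  by move/rot_inj => h; apply: val_inj; apply: h.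
by move=> a b; rewrite !cycle_relE !ffunE !val_inord_mod !csucc_rot.
Qed.

Lemma refl_emb n c : emb (@cycle_rel n.+3) (@cycle_rel n.+3) (refl n c).
Proof.
apply/embP; split.
  move=> x y; rewrite !ffunE => /(congr1 (@nat_of_ord _)); rewrite !val_inord_mod.
  by move/refl_inj => h; apply: val_inj; apply: h.
by move=> a b; rewrite !cycle_relE !ffunE !val_inord_mod !csucc_refl // orbC.
Qed.

Lemma csucc_sc n (a b : 'I_n.+3) : csucc n a b = (b == sc a).
Proof. by rewrite /csucc -val_eqE /= val_inord_mod eq_sym. Qed.

Lemma Aut_cycle n : #|Aut (@cycle_rel n.+3)| = 2 * n.+3.
Proof.
pose phi (s : {ffun 'I_n.+3 -> 'I_n.+3}) := (s ord0, s (inord 1)).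
have i0 : (inord 0 : 'I_n.+3) = ord0 by apply: val_inj; rewrite /= inordK.
have inj : {in Aut (@cycle_rel n.+3) &, injective phi}.
  move=> s1 s2; rewrite !inE => h1 h2 [e0 e1].
  have [wF1 wF2] := walk_of_emb (@path_cycle _) h1.
  have [wG1 wG2] := walk_of_emb (@path_cycle _) h2.
  have := walk_uniq (@sym_cycle _) (@three_cycle _) wF1 wF2 wG1 wG2.
  rewrite i0 => /(_ e0 e1) h; apply/ffunP => x.
  by have := h x (ltn_ord x); rewrite !inord_val.
have img : phi @: Aut (@cycle_rel n.+3) = [set p | cycle_rel p.1 p.2].
  apply/setP => [[a b]]; rewrite inE /=; apply/imsetP/idP.
    case=> s; rewrite inE => /embP [_ hH] [-> ->].
    by rewrite -hH /cycle_rel /path_rel /= inordK.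
  rewrite cycle_relE => /orP [] h.
    exists (rot n a); first by rewrite inE rot_emb.
    rewrite /phi !ffunE; congr pair; apply: val_inj; rewrite /= val_inord_mod.
      by rewrite addn0 modn_small.
    by move/eqP: h; rewrite inordK // addn1.
  exists (refl n a); first by rewrite inE refl_emb.
  rewrite /phi !ffunE; congr pair; apply: val_inj; rewrite /= val_inord_mod.
    by rewrite subn0 modnDr modn_small.
  move/eqP: h => <-; rewrite inordK // modnDml.
  have -> : b.+1 + (n.+3 - 1) = b + n.+3 by lia.
  by rewrite modnDr modn_small.
rewrite -(card_in_imset inj) img.
have -> : [set p : 'I_n.+3 * 'I_n.+3 | cycle_rel p.1 p.2] =
   [set (a, sc a) | a : 'I_n.+3] :|: [set (sc a, a) | a : 'I_n.+3].
  apply/setP => [[a b]]; rewrite !inE /= cycle_relE !csucc_sc.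
  apply/orP/orP => [[] /eqP ->|[] /imsetP [c _ [-> ->]]].
  - by left; apply: imset_f.
  - by right; apply: imset_f.
  - by left.
  - by right.
rewrite cardsU.
have -> : [set (a, sc a) | a : 'I_n.+3] :&: [set (sc a, a) | a : 'I_n.+3] = set0.
  apply/setP => [[a b]]; rewrite !inE; apply/negP => /andP [/imsetP [c _ [-> ->]]].
  case/imsetP => d _ [e1 e2].
  have h1 : csucc n c (sc c) by rewrite csucc_sc.
  have h2 : csucc n (sc c) c by rewrite e2 e1 csucc_sc.
  by apply: (csucc_antisym (ltn_ord c) (ltn_ord (sc c)) h1 h2).
rewrite cards0 subn0 !card_imset ?card_ord; first by lia.
- by move=> x y [].
- by move=> x y [].
Qed.

Section Ext.
Variable V : finType.
Variable r : rel V.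
Hypothesis hsym : symmetric r.
Hypothesis hirr : irreflexive r.
Hypothesis hth : three r.
Variable n : nat.

Definition restr (g : {ffun 'I_n.+2 -> V}) : {ffun 'I_n.+1 -> V} := [ffun i : 'I_n.+1 => g (inord i)].
Definition extend (f : {ffun 'I_n.+1 -> V}) (x : V) : {ffun 'I_n.+2 -> V} :=
  [ffun i : 'I_n.+2 => if i == ord_max then x else f (inord i)].
Definition ext (f : {ffun 'I_n.+1 -> V}) := #|[set x | (x \notin im f) && r (f ord_max) x]|.
Definition ES := [set g : {ffun 'I_n.+2 -> V} |
  [&& emb r (@path_rel _) (restr g), g ord_max \notin im (restr g) & r (restr g ord_max) (g ord_max)]].

Lemma restr_extend f x : restr (extend f x) = f.
Proof.
apply/ffunP => i; rewrite !ffunE.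
have -> : ((inord i : 'I_n.+2) == ord_max) = false.
  by rewrite -val_eqE /= inordK //; have := ltn_ord i; lia.
congr (f _); apply: val_inj; rewrite /= !inordK //; have := ltn_ord i; lia.
Qed.

Lemma extend_last f x : extend f x ord_max = x.
Proof. by rewrite ffunE eqxx. Qed.

Lemma restr_val (g : {ffun 'I_n.+2 -> V}) (a : 'I_n.+2) : a != ord_max -> g a = restr g (inord a).
Proof.
move=> ha; rewrite ffunE; congr (g _).
have hav : val a < n.+1 by move: ha; rewrite -val_eqE /=; have := ltn_ord a; lia.
apply: val_inj; rewrite /= inordK; rewrite inordK //; lia.
Qed.

Lemma ES_card : #|ES| = \sum_(f in Emb r (@path_rel n.+1)) ext f.
Proof.
pose phi (g : {ffun 'I_n.+2 -> V}) := (restr g, g ord_max).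
have phi_inj : injective phi.
  move=> g1 g2 [e1 e2]; apply/ffunP => a.
  case: (eqVneq a ord_max) => [->|ha] //.
  by rewrite !(restr_val _ ha) e1.
rewrite -(card_imset _ phi_inj).
have -> : phi @: ES = [set p : {ffun 'I_n.+1 -> V} * V |
    [&& emb r (@path_rel _) p.1, p.2 \notin im p.1 & r (p.1 ord_max) p.2]].
  apply/setP => [[f x]]; rewrite inE /=; apply/imsetP/idP.
    by case=> g; rewrite inE => hg [-> ->].
  move=> h; exists (extend f x); last by rewrite /phi restr_extend extend_last.
  by rewrite inE restr_extend extend_last.
rewrite /ext.
under eq_bigr => f _ do rewrite -sum1dep_card.
rewrite pair_big_dep sum1dep_card; apply: eq_card => p; rewrite !inE.
by case: (emb _ _ _).
Qed.

Lemma nonadj (f : {ffun 'I_n.+1 -> V}) x (j : 'I_n.+1) :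
  emb r (@path_rel _) f -> x \notin im f -> 0 < j < n -> ~~ r (f j) x.
Proof.
move=> /embP [hi hr] hx hj; apply/negP => hjx.
pose a : 'I_n.+1 := inord j.-1.
pose b : 'I_n.+1 := inord j.+1.
have ha : r (f j) (f a) by rewrite -hr /path_rel /a inordK; [lia | lia].
have hb : r (f j) (f b) by rewrite -hr /path_rel /b inordK; [lia | lia].
have hab : f a != f b.
  apply/negP => /eqP /hi /(congr1 (@nat_of_ord _)); rewrite /a /b !inordK; lia.
by case: (hth ha hb hjx hab) => e; move: hx; rewrite e /im imset_f.
Qed.

End Ext.

Section Ext2.
Variable V : finType.
Variable r : rel V.
Hypothesis hsym : symmetric r.
Hypothesis hirr : irreflexive r.
Hypothesis hth : three r.
Variable n : nat.

Lemma ES_key g : g \in ES r n -> forall c : 'I_n.+2, c != ord_max ->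
    r (g ord_max) (g c) = (nat_of_ord c == n) || ((nat_of_ord c == 0) && r (g ord0) (g ord_max)).
Proof.
rewrite inE => /and3P [hf hx hl].
move=> c hc; have hcv : nat_of_ord c < n.+1 by move: hc; rewrite -val_eqE /=; have := ltn_ord c; lia.
have [hcn|hcn] := boolP (nat_of_ord c == n).
  rewrite hsym (restr_val _ hc); move: hl; congr (r (restr g _) _ = true).
  by apply: val_inj; rewrite /= inordK // (eqP hcn).
have [hc0|hc0] := boolP (nat_of_ord c == 0).
  have -> : c = ord0 by apply: val_inj; rewrite /= (eqP hc0).
  by rewrite hsym.
rewrite (restr_val _ hc) /=.
apply/negbTE; rewrite hsym; apply: nonadj => //.
by rewrite inordK //; lia.
Qed.

Lemma ES_inj g : g \in ES r n -> injective g.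
Proof.
move=> hg; move: (hg); rewrite inE => /and3P [/embP [hi _] hx _] a b.
have nm : forall c : 'I_n.+2, c != ord_max -> g c \in im (restr g).
  by move=> c hc; rewrite (restr_val _ hc) /im imset_f.
case: (boolP (a == ord_max)) => [/eqP ->|ha]; case: (boolP (b == ord_max)) => [/eqP ->|hb] //.
- by move=> e; move: hx; rewrite e nm.
- by move=> e; move: hx; rewrite -e nm.
- rewrite (restr_val _ ha) (restr_val _ hb) => /hi /(congr1 (@nat_of_ord _)).
  move: ha hb; rewrite -!val_eqE /= => ha hb.
  rewrite !inordK => [e| |]; first by apply: val_inj.
  + by have := ltn_ord b; lia.
  + by have := ltn_ord a; lia.
Qed.

Lemma ES_adj g : g \in ES r n -> forall a b : 'I_n.+2,
  r (g a) (g b) = path_rel a b ||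
    (r (g ord0) (g ord_max) && ((nat_of_ord a == 0) && (nat_of_ord b == n.+1) ||
                                (nat_of_ord b == 0) && (nat_of_ord a == n.+1))).
Proof.
move=> hg; move: (hg); rewrite inE => /and3P [/embP [hi hr] hx _] a b.
have ka := @ES_key g hg a; have kb := @ES_key g hg b.
have la := ltn_ord a; have lb := ltn_ord b.
move: (r (g ord0) (g ord_max)) ka kb => R ka kb.
case: (boolP (a == ord_max)) => [/eqP ea|ha]; case: (boolP (b == ord_max)) => [/eqP eb|hb].
- rewrite ea eb hirr /path_rel /=; case: R {ka kb}; lia.
- rewrite ea (kb hb) /path_rel /=; move: hb; rewrite -val_eqE /=; case: R {ka kb}; lia.
- rewrite eb hsym (ka ha) /path_rel /=; move: ha; rewrite -val_eqE /=; case: R {ka kb}; lia.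
- rewrite (restr_val _ ha) (restr_val _ hb) -hr /path_rel !inordK.
  + move: ha hb; rewrite -!val_eqE /=; case: R {ka kb}; lia.
  + by move: hb; rewrite -val_eqE /=; lia.
  + by move: ha; rewrite -val_eqE /=; lia.
Qed.

Lemma sub_ES (H : rel 'I_n.+2) :
  (forall a b : 'I_n.+2, nat_of_ord a < n.+1 -> nat_of_ord b < n.+1 -> H a b = path_rel a b) ->
  H (inord n) ord_max -> forall g, emb r H g -> g \in ES r n.
Proof.
move=> hH1 hH2 g /embP [hi hr]; rewrite inE.
have iv : forall i : 'I_n.+1, nat_of_ord (inord i : 'I_n.+2) = i.
  by move=> i; rewrite inordK //; have := ltn_ord i; lia.
apply/and3P; split.
- apply/embP; split.
    move=> a b; rewrite !ffunE => /hi /(congr1 (@nat_of_ord _)); rewrite !iv => e.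
    by apply: val_inj.
  move=> a b; rewrite !ffunE -hr hH1; first by rewrite /path_rel !iv.
    by rewrite iv.
  by rewrite iv.
- apply/negP => /imsetP [i _]; rewrite ffunE => /hi /(congr1 (@nat_of_ord _)); rewrite iv /=.
  by have := ltn_ord i; lia.
- by rewrite ffunE -hr.
Qed.

End Ext2.

Lemma ES_split (V : finType) (r : rel V) (hsym : symmetric r) (hirr : irreflexive r) (hth : three r) n :
   #|ES r n| = #|Emb r (@path_rel n.+2)| + (if n is 0 then 0 else #|Emb r (@cycle_rel n.+2)|).
Proof.
have Psub : Emb r (@path_rel n.+2) \subset ES r n.
  apply/subsetP => g; rewrite inE; apply: (@sub_ES _ _ n (@path_rel n.+2)) => //.
  by rewrite /path_rel inordK // eqxx.
have Pin : forall g, g \in ES r n -> (n == 0) || ~~ r (g ord0) (g ord_max) -> g \in Emb r (@path_rel n.+2).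
  move=> g hg hc; rewrite inE; apply/embP; split; first exact: ES_inj hg.
  move=> a b; rewrite (ES_adj hsym hirr hth hg) /path_rel; have := ltn_ord a; have := ltn_ord b.
  move: hc; case: (r _ _); lia.
case: n Psub Pin => [|m] Psub Pin.
  rewrite addn0; apply/eqP; rewrite eqn_leq (subset_leq_card Psub) andbT.
  by apply/subset_leq_card/subsetP => g hg; apply: Pin.
have Csub : Emb r (@cycle_rel m.+3) \subset ES r m.+1.
  apply/subsetP => g; rewrite inE; apply: (@sub_ES _ _ m.+1 (@cycle_rel m.+3)).
    by move=> a b ha hb; rewrite /cycle_rel /=; lia.
  by rewrite /cycle_rel /path_rel inordK // eqxx.
have -> : ES r m.+1 = Emb r (@path_rel m.+3) :|: Emb r (@cycle_rel m.+3).
  apply/eqP; rewrite eqEsubset subUset Psub Csub !andbT; apply/subsetP => g hg.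
  rewrite inE; case: (boolP (r (g ord0) (g ord_max))) => hc; last by rewrite Pin ?hc ?orbT.
  apply/orP; right; rewrite inE; apply/embP; split; first exact: ES_inj hg.
  move=> a b; rewrite (ES_adj hsym hirr hth hg) hc /cycle_rel /path_rel /=.
  have := ltn_ord a; have := ltn_ord b; lia.
rewrite cardsU.
have -> : Emb r (@path_rel m.+3) :&: Emb r (@cycle_rel m.+3) = set0.
  apply/setP => g; rewrite !inE; apply/negP => /andP [/embP [_ h1] /embP [_ h2]].
  have := h1 ord0 ord_max; rewrite -h2 /cycle_rel /path_rel /=; lia.
by rewrite cards0 subn0.
Qed.

Lemma card_predS n : #|[set j : 'I_n.+1 | j.+1 == n]| = (0 < n).
Proof.
case: n => [|m].
  by apply/eqP; rewrite cards_eq0; apply/eqP/setP => j; rewrite !inE.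
have -> : [set j : 'I_m.+2 | j.+1 == m.+1] = [set inord m].
  by apply/setP => j; rewrite !inE -val_eqE /= inordK //; lia.
by rewrite cards1.
Qed.

Lemma ext_deg (V : finType) (r : rel V) n (f : {ffun 'I_n.+1 -> V}) :
  emb r (@path_rel n.+1) f -> ext r f + (0 < n) = deg r (f ord_max).
Proof.
move=> hf; move/embP: (hf) => [hi hr].
pose S := [set j : 'I_n.+1 | j.+1 == n].
have -> : deg r (f ord_max) = #|[set x | (x \notin im f) && r (f ord_max) x] :|: f @: S|.
  rewrite /deg; apply: eq_card => y; rewrite !inE.
  case: (boolP (y \in im f)) => /= hy.
    case/imsetP: hy => j _ ->; rewrite (mem_imset _ _ hi) inE -hr /path_rel /=.
    by have := ltn_ord j; lia.
  have -> : (y \in f @: S) = false.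
    by apply/negP => /imsetP [j _ e]; move: hy; rewrite e /im imset_f.
  by rewrite orbF.
rewrite cardsU.
have -> : [set x | (x \notin im f) && r (f ord_max) x] :&: f @: S = set0.
  apply/setP => y; rewrite !inE; apply/negP => /andP [/andP [hy _] /imsetP [j _ e]].
  by move: hy; rewrite e /im imset_f.
rewrite cards0 subn0 card_imset // /ext; congr (_ + _).
by rewrite card_predS.
Qed.

Lemma RHS_id (V : finType) (r : rel V) (hsym : symmetric r) (hirr : irreflexive r)
  (hdeg : forall x, deg r x <= 2) n :
  \sum_(f in Emb r (@path_rel n.+1)) (2 - deg r (f ord_max)) + 2 * sP r n.+2
     + 2 * n.+2 * sC r n.+2 = 2 * sP r n.+1.
Proof.
have hth := three_deg hdeg.
set D := \sum_(f in _) _.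
have h1 : D + \sum_(f in Emb r (@path_rel n.+1)) deg r (f ord_max) = 2 * #|Emb r (@path_rel n.+1)|.
  rewrite /D -big_split /= mulnC -sum_nat_const; apply: eq_bigr => f _.
  by rewrite subnK.
have h2 : \sum_(f in Emb r (@path_rel n.+1)) deg r (f ord_max)
     = #|ES r n| + #|Emb r (@path_rel n.+1)| * (0 < n).
  rewrite ES_card -sum_nat_const -big_split /=; apply: eq_bigr => f.
  by rewrite inE => hf; rewrite ext_deg.
rewrite (ES_split hsym hirr hth) in h2.
rewrite h2 (O1 r (@path_rel n.+1)) (O1 r (@path_rel n.+2)) in h1.
rewrite /sP.
case: n D h1 h2 => [|m] D h1 h2.
  rewrite Aut_path1 Aut_path2 /sC /= in h1 *; lia.
rewrite (O1 r (@cycle_rel m.+3)) !Aut_path2 Aut_cycle /sC /= in h1 *.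
set X := s_count r (@cycle_rel m.+3) in h1 *.
rewrite mulnA in h1; rewrite [2 * m.+3 * X]mulnC [X * (2 * m.+3)]mulnC in h1 *.
set Y := _ * X in h1 *; lia.
Qed.


Lemma card_eqv M t : #|[set j : 'I_M | nat_of_ord j == t]| = (t < M).
Proof.
case: (ltnP t M) => h.
  have -> : [set j : 'I_M | nat_of_ord j == t] = [set Ordinal h].
    by apply/setP => j; rewrite !inE -val_eqE.
  by rewrite cards1.
apply/eqP; rewrite cards_eq0; apply/eqP/setP => j; rewrite !inE.
by apply/negP => /eqP e; have := ltn_ord j; rewrite e; lia.
Qed.

Lemma card_path_nbr M (i : 'I_M) : #|[set j | path_rel i j]| = (0 < i) + (i.+1 < M).
Proof.
have -> : [set j | path_rel i j] = [set j : 'I_M | (nat_of_ord j == i.-1) && (0 < i)]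
                                 :|: [set j : 'I_M | nat_of_ord j == i.+1].
  by apply/setP => j; rewrite !inE /path_rel; lia.
rewrite cardsU.
have -> : [set j : 'I_M | (nat_of_ord j == i.-1) && (0 < i)] :&: [set j : 'I_M | nat_of_ord j == i.+1] = set0.
  by apply/setP => j; rewrite !inE; lia.
rewrite cards0 subn0 card_eqv; congr (_ + _).
case: (boolP (0 < i)) => hi; last first.
  by apply/eqP; rewrite cards_eq0; apply/eqP/setP => j; rewrite !inE andbF.
have -> : [set j : 'I_M | (nat_of_ord j == i.-1) && true] = [set j : 'I_M | nat_of_ord j == i.-1].
  by apply/setP => j; rewrite !inE andbT.
by rewrite card_eqv; have := ltn_ord i; lia.
Qed.

Section LHS.
Variable V : finType.
Variable r : rel V.
Hypothesis hsym : symmetric r.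
Hypothesis hirr : irreflexive r.
Hypothesis hdeg : forall x, deg r x <= 2.

Definition comp (v : V) := [set y | connect r v y].

Lemma comp_closed v x y : x \in comp v -> r x y -> y \in comp v.
Proof. by rewrite !inE => h1 h2; apply: connect_trans h1 (connect1 h2). Qed.

Lemma path_deg m (g : {ffun 'I_m -> V}) (i : 'I_m) :
  emb r (@path_rel m) g -> (forall y, r (g i) y -> y \in im g) ->
  deg r (g i) = (0 < i) + (i.+1 < m).
Proof.
move=> /embP [hi hr] hcl; rewrite /deg -card_path_nbr -(card_imset _ hi).
apply: eq_card => y; rewrite !inE; apply/idP/imsetP.
  by move=> hy; case/imsetP: (hcl _ hy) => j _ e; exists j; rewrite // inE hr -e.
by case=> j; rewrite inE hr => h ->.
Qed.

Lemma sub_emb m n (g : {ffun 'I_m.+1 -> V}) (h : 'I_n.+1 -> nat) :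
  emb r (@path_rel _) g -> (forall j, h j < m.+1) ->
  (forall a b, path_rel a b = ((h a).+1 == h b) || ((h b).+1 == h a)) ->
  (forall a b, h a = h b -> a = b) ->
  emb r (@path_rel _) [ffun j => g (inord (h j))].
Proof.
move=> /embP [hi hr] hm hp hinj; apply/embP; split.
  move=> a b; rewrite !ffunE => /hi /(congr1 (@nat_of_ord _)); rewrite !inordK //.
  exact: hinj.
by move=> a b; rewrite !ffunE -hr hp /path_rel !inordK.
Qed.


Lemma sum_ind M (P : pred 'I_M) : \sum_(i < M) (P i : nat) = #|[set i | P i]|.
Proof. by rewrite -sum1dep_card [RHS]big_mkcond /=; apply: eq_bigr => i _; case: (P i). Qed.

Lemma iso_path_gen (C : {set V}) : induced_iso r C (@path_rel #|C|) -> 0 < #|C| ->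
  exists m (g : {ffun 'I_m.+1 -> V}), [/\ emb r (@path_rel _) g, C = im g & #|C| = m.+1].
Proof.
case: #|C| => [|m] // h _.
move: h; rewrite induced_isoE => /existsP [g /andP [hg /eqP hC]].
by exists m, g.
Qed.

Lemma path_gen_iso m (g : {ffun 'I_m.+1 -> V}) : emb r (@path_rel _) g ->
  induced_iso r (im g) (@path_rel #|im g|).
Proof.
move=> hg; move/embP: (hg) => [hi _].
rewrite (card_im hi) induced_isoE; apply/existsP; exists g; by rewrite hg eqxx.
Qed.

Lemma sum_path_deg m (g : {ffun 'I_m.+1 -> V}) : emb r (@path_rel _) g ->
  (forall i y, r (g i) y -> y \in im g) -> \sum_(w in im g) (2 - deg r w) = 2.
Proof.
move=> hg hcl; move/embP: (hg) => [hi _].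
rewrite big_imset; last by move=> x y _ _; apply: hi.
rewrite /= (eq_bigr (fun i : 'I_m.+1 => ((nat_of_ord i == 0) : nat) + (nat_of_ord i == m))).
  rewrite big_split /= !sum_ind !card_eqv. by rewrite ltnS leqnn.
move=> i _; rewrite (path_deg hg (hcl i)); have := ltn_ord i; lia.
Qed.


Variable n : nat.
Definition Spc := [set C in components r | (n.+1 <= #|C|) && induced_iso r C (@path_rel #|C|)].

Lemma comp_im m (g : {ffun 'I_m.+1 -> V}) v : comp v = im g ->
  forall i y, r (g i) y -> y \in im g.
Proof. by move=> hC i y hy; rewrite -hC; apply: comp_closed hy; rewrite hC /im imset_f. Qed.

Lemma L1back w : deg r w <= 1 -> comp w \in Spc ->
  exists2 f, f \in Emb r (@path_rel n.+1) & f ord_max = w.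
Proof.
move=> hw; rewrite inE => /andP [_ /andP [hsz hiso]].
have hpos : 0 < #|comp w| by apply/card_gt0P; exists w; rewrite inE connect0.
have [m [g [hg hC hcard]]] := iso_path_gen hiso hpos.
have hcl := comp_im hC.
have : w \in im g by rewrite -hC inE connect0.
case/imsetP => i _ hwi.
have hd := path_deg hg (hcl i).
rewrite hwi hd in hw.
have hnm : n <= m by lia.
have li := ltn_ord i.
have [him|hi0] : nat_of_ord i = m \/ nat_of_ord i = 0 by lia.
- exists [ffun j : 'I_n.+1 => g (inord (m - n + j))].
    rewrite inE; apply: sub_emb => //.
    + by move=> j; have := ltn_ord j; lia.
    + by move=> a b; rewrite /path_rel; lia.
    + by move=> a b e; apply: val_inj => /=; lia.
  rewrite ffunE hwi; congr (g _); apply: val_inj; rewrite /= inordK; lia.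
- exists [ffun j : 'I_n.+1 => g (inord (n - j))].
    rewrite inE; apply: sub_emb => //.
    + by move=> j; have := ltn_ord j; lia.
    + by move=> a b; rewrite /path_rel; have := ltn_ord a; have := ltn_ord b; lia.
    + by move=> a b e; apply: val_inj => /=; have := ltn_ord a; have := ltn_ord b; lia.
  rewrite ffunE hwi; congr (g _); apply: val_inj; rewrite /= inordK; lia.
Qed.

Lemma L2 w (f1 f2 : {ffun 'I_n.+1 -> V}) : deg r w <= 1 ->
  f1 \in Emb r (@path_rel n.+1) -> f2 \in Emb r (@path_rel n.+1) ->
  f1 ord_max = w -> f2 ord_max = w -> f1 = f2.
Proof.
move=> hw; rewrite !inE => h1 h2 e1 e2.
have imax : (inord n : 'I_n.+1) = ord_max by apply: val_inj; rewrite /= inordK.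
case: (posnP n) => hn.
  apply/ffunP => x; have -> : x = ord_max by apply: val_inj; have := ltn_ord x; rewrite /=; lia.
  by rewrite e1 e2.
pose f1' := [ffun j : 'I_n.+1 => f1 (inord (n - j))].
pose f2' := [ffun j : 'I_n.+1 => f2 (inord (n - j))].
have hrev : forall f, emb r (@path_rel n.+1) f -> emb r (@path_rel _) [ffun j : 'I_n.+1 => f (inord (n - j))].
  move=> f hf; apply: sub_emb => //.
  + by move=> j; have := ltn_ord j; lia.
  + by move=> a b; rewrite /path_rel; have := ltn_ord a; have := ltn_ord b; lia.
  + by move=> a b e; apply: val_inj => /=; have := ltn_ord a; have := ltn_ord b; lia.
have [wF1 wF2] := walk_of_emb (fun a b (h : path_rel a b) => h) (hrev _ h1).
have [wG1 wG2] := walk_of_emb (fun a b (h : path_rel a b) => h) (hrev _ h2).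
have th := three_deg hdeg.
have := walk_uniq hsym th wF1 wF2 wG1 wG2.
have i0 : forall f : {ffun 'I_n.+1 -> V}, [ffun j : 'I_n.+1 => f (inord (n - j))] (inord 0) = f ord_max.
  by move=> f; rewrite ffunE inordK // subn0 imax.
rewrite !i0 e1 e2 => /(_ erefl).
have nb : forall f : {ffun 'I_n.+1 -> V}, emb r (@path_rel n.+1) f ->
   r (f ord_max) ([ffun j : 'I_n.+1 => f (inord (n - j))] (inord 1)).
  move=> f /embP [_ hr]; rewrite ffunE -hr /path_rel /= !inordK; lia.
have := nb _ h1; have := nb _ h2; rewrite e1 e2 => n2 n1.
move=> /(_ (deg1_uniq hw n1 n2)) h.
apply/ffunP => x.
have := h (n - x); rewrite !ffunE inordK; last by have := ltn_ord x; lia.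
have -> : (inord (n - (n - x)) : 'I_n.+1) = x.
  by apply: val_inj; rewrite /= inordK; have := ltn_ord x; lia.
by apply; have := ltn_ord x; lia.
Qed.


Lemma L1fwd w (f : {ffun 'I_n.+1 -> V}) : deg r w <= 1 ->
  f \in Emb r (@path_rel n.+1) -> f ord_max = w -> comp w \in Spc.
Proof.
move=> hw; rewrite inE => hf hfw.
have th := three_deg hdeg.
pose P M := [exists g : {ffun 'I_M.+1 -> V}, emb r (@path_rel _) g && (g ord0 == w)].
have exP : P n.
  apply/existsP; exists [ffun j : 'I_n.+1 => f (inord (n - j))]; apply/andP; split.
    apply: sub_emb => //.
    + by move=> j; have := ltn_ord j; lia.
    + by move=> a b; rewrite /path_rel; have := ltn_ord a; have := ltn_ord b; lia.
    + by move=> a b e; apply: val_inj => /=; have := ltn_ord a; have := ltn_ord b; lia.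
  rewrite ffunE subn0 -hfw; apply/eqP; congr (f _); apply: val_inj; by rewrite /= inordK.
have ubP : forall M, P M -> M <= #|V|.
  move=> M /existsP [g /andP [/embP [hi _] _]].
  by have := max_card (im g); rewrite card_im //; lia.
case: (ex_maxnP (ex_intro P n exP) ubP) => M /existsP [g /andP [hg /eqP hg0]] hmax.
have hnM : n <= M by apply: hmax; exact: exP.
move/embP: (hg) => [hgi hgr].
have i0 : (inord 0 : 'I_M.+1) = ord0 by apply: val_inj; rewrite /= inordK.
have hcl : forall i y, r (g i) y -> y \in im g.
  move=> i y hy; apply/negPn/negP => hyn.
  have w1 : 0 < M -> r w (g (inord 1)).
    by move=> hM; rewrite -hg0 -hgr /path_rel /= inordK //; lia.
  have wy : 0 < M -> ~~ r w y.
    move=> hM; apply/negP => hwy; move: hyn.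
    by rewrite (deg1_uniq hw hwy (w1 hM)) /im imset_f.
  case: (boolP (i == ord_max)) => [/eqP him|hin].
    pose g' := extend g y.
    have hES : g' \in ES r M by rewrite inE restr_extend extend_last hg hyn -him hy.
    have g'0 : g' ord0 = w.
      rewrite ffunE -hg0; have -> : ((ord0 : 'I_M.+2) == ord_max) = false by [].
      congr (g _); apply: val_inj; by rewrite /= inordK.
    have : P M.+1.
      apply/existsP; exists g'; rewrite g'0 eqxx andbT; apply/embP; split.
        exact: ES_inj hES.
      move=> a b; rewrite (ES_adj hsym hirr th hES) g'0 extend_last.
      case: (posnP M) => hM.
        by rewrite /path_rel; have := ltn_ord a; have := ltn_ord b; case: (r _ _) => /=; lia.
      by rewrite (negbTE (wy hM)) /= orbF.
    by move/hmax; lia.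
  have hiM : nat_of_ord i < M by move: hin; rewrite -val_eqE /=; have := ltn_ord i; lia.
  case: (posnP i) => hi0.
    have hM : 0 < M by lia.
    have ei : i = ord0 by apply: val_inj.
    by move: hy; rewrite ei hg0; apply/negP; apply: wy.
  have hi' : (inord i : 'I_M.+1) = i by rewrite inord_val.
  have := @nonadj V r th M g y i hg hyn; rewrite hy.
  by rewrite hi0 hiM => /(_ isT).
have hCeq : comp w = im g.
  apply/setP => y; rewrite inE; apply/idP/idP.
    move=> hc; have hcl' : closed r (im g).
      apply: intro_closed; first exact: sym_connect_sym.
      by move=> x z hxz /imsetP [j _ e]; rewrite e in hxz; apply: hcl hxz.
    by rewrite -(closed_connect hcl' hc) -hg0 /im imset_f.
  case/imsetP => j _ ->.
  have [wF1 _] := walk_of_emb (fun a b (h : path_rel a b) => h) hg.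
  suff : forall t, t < M.+1 -> connect r w (g (inord t)).
    by move/(_ j (ltn_ord j)); rewrite inord_val.
  elim=> [|t IH] ht; first by rewrite i0 hg0 connect0.
  by apply: connect_trans (IH (ltnW ht)) (connect1 (wF1 t ht)).
rewrite inE; apply/and3P; split.
- by rewrite /components; apply/imsetP; exists w.
- by rewrite hCeq card_im.
- by rewrite hCeq; apply: path_gen_iso.
Qed.


Lemma comp_in v w : (w \in comp v) = (comp w == comp v).
Proof.
have cs := sym_connect_sym hsym.
apply/idP/eqP => [hw|<-]; last by rewrite inE connect0.
apply/setP => y; rewrite !inE; rewrite inE in hw.
by rewrite (same_connect cs hw).
Qed.

Lemma LHS_id : \sum_(f in Emb r (@path_rel n.+1)) (2 - deg r (f ord_max)) = 2 * #|Spc|.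
Proof.
rewrite (partition_big (fun f : {ffun 'I_n.+1 -> V} => f ord_max) predT) //=.
have step1 : forall w, \sum_(f in Emb r (@path_rel n.+1) | f ord_max == w) (2 - deg r (f ord_max))
    = (2 - deg r w) * (comp w \in Spc).
  move=> w; rewrite (eq_bigr (fun _ => (2 - deg r w) * 1)); last by move=> f /andP [_ /eqP ->]; rewrite muln1.
  rewrite -big_distrr /= sum1dep_card.
  case: (leqP (deg r w) 1) => hw; last first.
    by have := hdeg w; have -> : 2 - deg r w = 0 by have := hdeg w; lia.
  congr (_ * _).
  case: (boolP (comp w \in Spc)) => hc.
    have [f hf hfw] := L1back hw hc.
    apply/eqP; rewrite eqn_leq; apply/andP; split.
      apply/card_le1_eqP => f1 f2; rewrite !inE => /andP [h1 /eqP e1] /andP [h2 /eqP e2].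
      by apply: (L2 hw (f1 := f2) (f2 := f1)); rewrite ?inE.
    by apply/card_gt0P; exists f; rewrite inE hf hfw eqxx.
  apply/eqP; rewrite cards_eq0; apply/eqP/setP => f; rewrite !inE.
  apply/negP => /andP [hf /eqP hfw].
  by move: hc; rewrite (L1fwd (f := f) hw) ?inE.
rewrite (eq_bigr _ (fun w _ => step1 w)).
rewrite (eq_bigr (fun w => if comp w \in Spc then 2 - deg r w else 0)); last first.
  by move=> w _; case: (comp w \in Spc); rewrite ?muln1 ?muln0.
rewrite -big_mkcond /=.
rewrite (partition_big comp (fun C => C \in Spc)) //=.
rewrite mulnC -sum_nat_const; apply: eq_bigr => C hC.
have : C \in components r by move: hC; rewrite inE => /andP [].
case/imsetP => v _ hCv.
rewrite (eq_bigl (fun w => w \in C)); last first.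
  move=> w /=; rewrite hCv -/(comp v) comp_in.
  case: (boolP (comp w == comp v)) => [/eqP ->|]; rewrite ?andbT ?andbF //.
  by rewrite /comp -hCv.
move: hC; rewrite inE => /andP [_ /andP [hsz hiso]].
have hpos : 0 < #|C| by lia.
have [m [g [hg hC hcard]]] := iso_path_gen hiso hpos.
rewrite hC; apply: sum_path_deg => //.
by apply: (@comp_im m g v); rewrite -hC hCv.
Qed.

End LHS.


Import GRing.Theory.
Local Open Scope ring_scope.

Theorem lemma4p2 (T : finType) (e : rel T) (k : nat) :
  symmetric e -> irreflexive e -> max_degree_eq e 2 -> (2 <= k)%N ->
  (n_path_comps e k.-1)%:Z
    = (sP e k.-1)%:Z - (sP e k)%:Z - (k%:Z * (sC e k)%:Z).
Proof.
move=> hsym hirr [hdeg _]; case: k => [|[|n]] // _.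
have hL := LHS_id hsym hirr hdeg n.
have hR := RHS_id hsym hirr hdeg n.
have hN : n_path_comps e n.+1 = #|Spc e n| by [].
rewrite /= hN.
have hA : (sP e n.+1 = #|Spc e n| + sP e n.+2 + n.+2 * sC e n.+2)%N.
  move: hR; rewrite hL; set X := (n.+2 * sC e n.+2)%N; rewrite -mulnA -/X; lia.
rewrite hA !PoszD PoszM.
set a := Posz #|Spc e n|; set b := Posz (sP e n.+2); set c := Posz n.+2 * Posz (sC e n.+2).
by rewrite [a + b + c]addrAC !addrK.
Qed.
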